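(* For every integer $n\ge 0$, \[ \sum_{k=0}^{n}\Big(-\frac{1}{4}\Big)^k\binom{n}{k}\binom{1+2k}{k}H_{1+2k} =\frac{1}{2^{1+2n}(1+2n)}\binom{1+2n}{n}\Big\{\frac{8+8n}{1+2n}+3H_n-4H_{1+2n}\Big\}-\frac{1}{1+n}. \]
   Context: For an integer $m\ge 0$, $H_m$ denotes the $m$-th harmonic number: $H_0=0$ and $H_m=\sum_{j=1}^m \frac1j$ for $m\ge1$. $\binom{n}{k}$ is the usual binomial coefficient. *)

(* Defs.v *)
From HB Require Import structures.
From mathcomp Require Import all_boot all_order all_algebra.
Set Implicit Arguments. Unset Strict Implicit. Unset Printing Implicit Defensive.
Import Order.TTheory GRing.Theory Num.Theory.
Local Open Scope ring_scope.

Definition harmonic (m : nat) : rat := \sum_(1 <= j < m.+1) (j%:R)^-1.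

(* Main.v *)
Require Import Defs.
From HB Require Import structures.
From mathcomp Require Import all_boot all_order all_algebra.
From mathcomp Require Import ring lra zify.
Import Order.TTheory GRing.Theory Num.Theory.
Local Open Scope ring_scope.

Definition qq : rat := - (1 / 4).
Definition tt n k : rat := qq ^+ k * ('C(n, k))%:R * ('C(1 + 2 * k, k))%:R.
Definition hh k : rat := harmonic (1 + 2 * k).

Lemma harmS m : harmonic m.+1 = harmonic m + (m.+1%:R)^-1.
Proof. by rewrite /harmonic big_nat_recr. Qed.

Lemma hhS k : hh k.+1 = hh k + (2 * k%:R + 2)^-1 + (2 * k%:R + 3)^-1.
Proof.
rewrite /hh (_ : (1 + 2 * k.+1 = (1 + 2 * k).+2)%N); last by lia.
rewrite !harmS.
have c1 : (((1 + 2 * k).+1)%:R : rat) = 2 * k%:R + 2.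
  rewrite (_ : ((1 + 2 * k).+1 = 2 * k + 2)%N); last by lia.
  rewrite natrD natrM; ring.
have c2 : (((1 + 2 * k).+2)%:R : rat) = 2 * k%:R + 3.
  rewrite (_ : ((1 + 2 * k).+2 = 2 * k + 3)%N); last by lia.
  rewrite natrD natrM; ring.
by rewrite c1 c2.
Qed.

Lemma hh0 : hh 0 = 1.
Proof. by rewrite /hh /harmonic big_nat1. Qed.

Lemma tt_out n : tt n n.+1 = 0.
Proof. by rewrite /tt bin_small // mulr0 mul0r. Qed.

Lemma tt0 n : tt n 0 = 1.
Proof. by rewrite /tt bin0 expr0 !mul1r. Qed.

Lemma binrel k : ('C(1 + 2 * k.+1, k.+1))%:R * (k%:R + 2) = 2 * (2 * k%:R + 3) * ('C(1 + 2 * k, k))%:R :> rat.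
Proof.
have H : ('C(1 + 2 * k.+1, k.+1) * k.+2 = 2 * (2 * k + 3) * 'C(1 + 2 * k, k))%N.
  have e1 : (1 + 2 * k.+1 = (2 * k + 3))%N by lia.
  rewrite e1.
  have h1 := mul_bin_diag (2 * k + 3) k.+1.
  have e2 : ((2 * k + 3).-1 = (1 + 2 * k).+1)%N by lia.
  rewrite e2 binS in h1.
  have s1 : 'C(2 * k + 3, k.+2) = 'C(2 * k + 3, k.+1).
    rewrite -(@bin_sub (2*k+3) k.+2); last by lia.
    by congr 'C(_, _); lia.
  have s2 : 'C((1 + 2 * k), k.+1) = 'C(1 + 2 * k, k).
    rewrite -(@bin_sub (1 + 2 * k) k.+1); last by lia.
    by congr 'C(_, _); lia.
  rewrite s1 s2 in h1. rewrite mulnC -h1. lia.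
have := congr1 (fun x : nat => x%:R : rat) H. cbv beta.
rewrite -[k.+2]addn2 !natrM !natrD. move=> ->. ring.
Qed.

Lemma binrel2 n k : (k%:R + 1) * ('C(n, k.+1))%:R = (n%:R - k%:R) * ('C(n, k))%:R :> rat.
Proof.
case: (ltnP k n) => hk.
  have := mul_bin_left n k. move/(congr1 (fun x : nat => x%:R : rat)).
  rewrite !natrM natrB; last by lia.
  by rewrite -natr1 => ->.
rewrite (@bin_small n k.+1); last by lia.
case: (ltnP n k) => hk2; first by rewrite bin_small // !mulr0.
have -> : k = n by lia.
by rewrite subrr mul0r mulr0.
Qed.

Lemma binrel3 n k : (k%:R + 1) * ('C(n.+1, k.+1))%:R = (n%:R + 1) * ('C(n, k))%:R :> rat.
Proof.
have := mul_bin_diag n.+1 k. move/(congr1 (fun x : nat => x%:R : rat)).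
by rewrite !natrM -!natr1 /= => ->.
Qed.

Lemma Lpt n k : 2 * (n%:R + 2) * tt n.+1 k.+1 - (2 * n%:R + 1) * tt n k.+1
  = (2 * k%:R + 5) * tt n k.+1 - (2 * k%:R + 3) * tt n k.
Proof.
rewrite /tt binS natrD.
have e1 : ('C(n, k.+1))%:R = (n%:R - k%:R) * ('C(n, k))%:R / (k%:R + 1) :> rat.
  rewrite -binrel2. field. have := ler0n rat k. lra.
have e2 : ('C(1 + 2 * k.+1, k.+1))%:R = 2 * (2 * k%:R + 3) * ('C(1 + 2 * k, k))%:R / (k%:R + 2) :> rat.
  rewrite -binrel. field. have := ler0n rat k. lra.
rewrite e1 e2 exprS /qq. field.
have := ler0n rat k. lra.
Qed.

Definition AA n := \sum_(0 <= k < n.+1) tt n k.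
Definition SS n := \sum_(0 <= k < n.+1) tt n k * hh k.
Definition DD n := \sum_(0 <= k < n.+1) qq ^+ k * ('C(n.+1, k.+1))%:R * ('C(1 + 2 * k, k))%:R.
Definition PP n : rat := (2 ^+ (1 + 2 * n) * (1 + 2 * n)%:R)^-1 * ('C(1 + 2 * n, n))%:R.

Lemma extend n (f : nat -> rat) :
  \sum_(0 <= k < n.+1) tt n k * f k = \sum_(0 <= k < n.+2) tt n k * f k.
Proof. by rewrite [RHS]big_nat_recr //= tt_out mul0r addr0. Qed.

Lemma core n (f : nat -> rat) :
  2 * (n%:R + 2) * \sum_(0 <= k < n.+2) tt n.+1 k * f k
  - (2 * n%:R + 1) * \sum_(0 <= k < n.+1) tt n k * f k
  = 3 * f 0%N + \sum_(0 <= k < n.+1)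
      ((2 * k%:R + 5) * tt n k.+1 - (2 * k%:R + 3) * tt n k) * f k.+1.
Proof.
rewrite (extend n) !mulr_sumr -sumrB big_nat_recl //.
rewrite !tt0; congr (_ + _); first ring.
apply: eq_bigr => k _. rewrite -Lpt. ring.
Qed.

Lemma gS k : (2 * k%:R + 5 : rat) = 2 * (k.+1)%:R + 3.
Proof. rewrite -natr1. ring. Qed.

Lemma A_rec n : 2 * (n%:R + 2) * AA n.+1 = (2 * n%:R + 1) * AA n.
Proof.
apply/eqP; rewrite -subr_eq0; apply/eqP.
have := core n (fun _ => 1).
rewrite /AA.
under eq_bigr do rewrite mulr1.
under [X in _ - _ * X]eq_bigr do rewrite mulr1.
move=> ->.
under eq_bigr do rewrite mulr1 gS.
rewrite (telescope_sumr (fun k => (2 * k%:R + 3) * tt n k)) //.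
rewrite tt_out tt0. ring.
Qed.

Lemma S_rec n : 2 * (n%:R + 2) * SS n.+1
   = (2 * n%:R + 1) * SS n - 2 * AA n - DD n / (2 * (n%:R + 1)).
Proof.
have C := core n hh. rewrite /SS.
suff -> : 2 * (n%:R + 2) * \sum_(0 <= k < n.+2) tt n.+1 k * hh k =
  (2 * (n%:R + 2) * \sum_(0 <= k < n.+2) tt n.+1 k * hh k
  - (2 * n%:R + 1) * \sum_(0 <= k < n.+1) tt n k * hh k) + (2 * n%:R + 1) * \sum_(0 <= k < n.+1) tt n k * hh k.
  2: by rewrite subrK.
rewrite C.
have E : forall k, ((2 * k%:R + 5) * tt n k.+1 - (2 * k%:R + 3) * tt n k) * hh k.+1
   = ((2 * (k.+1)%:R + 3) * tt n k.+1 * hh k.+1 - (2 * k%:R + 3) * tt n k * hh k)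
     - (2 * (DD n * 0 + 1) * tt n k + qq ^+ k * ('C(n.+1, k.+1))%:R * ('C(1 + 2 * k, k))%:R / (2 * (n%:R + 1))).
  move=> k. rewrite hhS -gS /tt.
  have e1 : ('C(n.+1, k.+1))%:R = (n%:R + 1) * ('C(n, k))%:R / (k%:R + 1) :> rat.
    rewrite -binrel3. field. have := ler0n rat k. lra.
  rewrite e1 mulr0 add0r. field.
  have := ler0n rat k. have := ler0n rat n. lra.
under eq_bigr do rewrite E.
rewrite sumrB (telescope_sumr (fun k => (2 * k%:R + 3) * tt n k * hh k)) //.
rewrite tt_out tt0 hh0 big_split /= -mulr_sumr -mulr_suml /AA /DD mulr0 add0r.
ring.
Qed.

Lemma D_rec n : DD n.+1 = DD n + AA n.+1.
Proof.
rewrite /DD /AA.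
under eq_bigr do rewrite binS natrD mulrDr mulrDl.
rewrite big_split /=. congr (_ + _).
  by rewrite big_nat_recr //= (@bin_small n.+1 n.+2) // mulr0 mul0r addr0.
Qed.

Lemma P_rec n : 2 * (n%:R + 2) * PP n.+1 = (2 * n%:R + 1) * PP n.
Proof.
rewrite /PP.
have e1 : (1 + 2 * n.+1 = (1 + 2 * n) + 2)%N by lia.
have hX : (2 : rat) ^+ (1 + 2 * n) != 0 by rewrite expf_neq0.
have e2 : ('C(1 + 2 * n.+1, n.+1))%:R = 2 * (2 * n%:R + 3) * ('C(1 + 2 * n, n))%:R / (n%:R + 2) :> rat.
  rewrite -binrel. field. have := ler0n rat n. lra.
rewrite e2 {1}e1 exprD.
have e3 : ((1 + 2 * n.+1)%:R : rat) = 2 * n%:R + 3.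
  rewrite (_ : (1 + 2 * n.+1 = 2 * n + 3)%N); last by lia.
  rewrite natrD natrM; ring.
have e4 : ((1 + 2 * n)%:R : rat) = 2 * n%:R + 1.
  rewrite (_ : (1 + 2 * n = 2 * n + 1)%N); last by lia.
  rewrite natrD natrM; ring.
rewrite e3 e4. field. apply/and3P; split => //; have := ler0n rat n; lra.
Qed.

Lemma P0 : PP 0 = 1 / 2.
Proof. rewrite /PP /= bin0 expr1 mulr1 mul1r. by []. Qed.

Lemma A0 : AA 0 = 1.
Proof. by rewrite /AA big_nat1 tt0. Qed.

Lemma A_closed n : AA n = 2 * PP n.
Proof.
elim: n => [|n IH]; first by rewrite A0 P0; field.
have hA := A_rec n. have hP := P_rec n.
have hn := ler0n rat n.
have hA' : AA n.+1 = (2 * n%:R + 1) * AA n / (2 * (n%:R + 2)).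
  rewrite -hA. field. lra.
have hP' : PP n.+1 = (2 * n%:R + 1) * PP n / (2 * (n%:R + 2)).
  rewrite -hP. field. lra.
rewrite hA' hP' IH. field. lra.
Qed.

Lemma D_closed n : DD n = 2 - (2 * n%:R + 1) * AA n.
Proof.
elim: n => [|n IH].
  rewrite A0 /DD big_nat1 expr0 bin0 binn. rewrite /=. ring.
rewrite D_rec IH.
have hA := A_rec n.
have hn := ler0n rat n.
have hA' : AA n = 2 * (n%:R + 2) * AA n.+1 / (2 * n%:R + 1).
  rewrite hA. field. lra.
rewrite hA' -natr1. field. lra.
Qed.

Definition FF n : rat := PP n * ((8 + 8 * n)%:R / (1 + 2 * n)%:R + 3 * harmonic n
         - 4 * harmonic (1 + 2 * n)) - (1 + n)%:R^-1.

Lemma harm0 : harmonic 0 = 0.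
Proof. by rewrite /harmonic big_geq. Qed.

Lemma main n : SS n = FF n.
Proof.
elim: n => [|n IH].
  rewrite /SS /FF big_nat1 tt0 hh0 P0 harm0.
  rewrite (_ : harmonic (1 + 2 * 0) = hh 0) // hh0 /=. by field.
have hS := S_rec n.
have hn := ler0n rat n.
have hS' : SS n.+1 = ((2 * n%:R + 1) * SS n - 2 * AA n - DD n / (2 * (n%:R + 2 - 1))) / (2 * (n%:R + 2)).
  rewrite (_ : n%:R + 2 - 1 = n%:R + 1 :> rat); last by ring.
  rewrite -hS. field. lra.
rewrite hS' IH D_closed A_closed /FF.
have hP' : PP n.+1 = (2 * n%:R + 1) * PP n / (2 * (n%:R + 2)).
  rewrite -P_rec. field. lra.
rewrite hP' harmS -/(hh n.+1) hhS /hh.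
have c1 : ((8 + 8 * n.+1)%:R : rat) = 8 * n%:R + 16.
  rewrite (_ : (8 + 8 * n.+1 = 8 * n + 16)%N); last by lia.
  rewrite natrD natrM; ring.
have c2 : ((8 + 8 * n)%:R : rat) = 8 * n%:R + 8.
  rewrite (_ : (8 + 8 * n = 8 * n + 8)%N); last by lia.
  rewrite natrD natrM; ring.
have c3 : ((1 + 2 * n.+1)%:R : rat) = 2 * n%:R + 3.
  rewrite (_ : (1 + 2 * n.+1 = 2 * n + 3)%N); last by lia.
  rewrite natrD natrM; ring.
have c4 : ((1 + 2 * n)%:R : rat) = 2 * n%:R + 1.
  rewrite (_ : (1 + 2 * n = 2 * n + 1)%N); last by lia.
  rewrite natrD natrM; ring.
have c5 : ((1 + n.+1)%:R : rat) = n%:R + 2.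
  rewrite (_ : (1 + n.+1 = n + 2)%N); last by lia.
  rewrite natrD; ring.
have c6 : ((1 + n)%:R : rat) = n%:R + 1.
  rewrite (_ : (1 + n = n + 1)%N); last by lia.
  rewrite natrD; ring.
have c7 : ((n.+1)%:R : rat) = n%:R + 1 by rewrite -natr1.
rewrite c1 c2 c3 c4 c5 c6 ?c7.
field. lra.
Qed.

Theorem theorem10 (n : nat) :
  \sum_(0 <= k < n.+1)
     (- (1 / 4 : rat)) ^+ k * ('C(n, k))%:R * ('C(1 + 2 * k, k))%:R
       * harmonic (1 + 2 * k)
  = (2 ^+ (1 + 2 * n) * (1 + 2 * n)%:R)^-1 * ('C(1 + 2 * n, n))%:R
      * ((8 + 8 * n)%:R / (1 + 2 * n)%:R + 3 * harmonic n
         - 4 * harmonic (1 + 2 * n))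
    - (1 + n)%:R^-1.
Proof. exact: (main n). Qed.
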